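(* Fix an integer base $b \ge 2$ and a function $f_*:\{0,1,\dots,b-1\}\to\mathbb{Z}^{\ge 0}$ with $f_*(0)=0$, $f_*(1)=1$ and $\gcd(b,f_*(b-1))=1$. Let $f:\mathbb{Z}^{\ge 0}\to\mathbb{Z}^{\ge 0}$ be the associated digit map, $f\left(\sum_{i=0}^n a_i b^i\right)=\sum_{i=0}^n f_*(a_i)$, where $\sum_{i=0}^n a_ib^i$ is the base-$b$ representation ($0\le a_i\le b-1$). Suppose there is a digit $0\le m_*\le b-1$ such that $f(m_* )-m_*$ is relatively prime to $f(b-1)$. Then for any cycle number $u$ and any positive integer $n$, there exist $n$ consecutive positive integers that are all $u$-integers.
   Context: $f^r$ denotes the $r$-fold iterate of $f$. A cycle number is a positive integer $u$ with $f^r(u)=u$ for some $r\ge 1$. For a cycle number $u$, a positive integer $n$ is a $u$-integer if $f^r(n)=u$ for some $r\ge 1$. *)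

(* Defs.v *)
From mathcomp Require Import all_boot all_order all_algebra.
Set Implicit Arguments. Unset Strict Implicit. Unset Printing Implicit Defensive.

Definition digit (b n i : nat) : nat := (n %/ b ^ i) %% b.

(* Digit map: sum of fstar over the base-b representation of n, which has
   digits a_0, ..., a_k with k = trunc_log b n (for n = 0 the representation
   is the single digit 0). *)
Definition digit_map (b : nat) (fstar : nat -> nat) (n : nat) : nat :=
  \sum_(i < (trunc_log b n).+1) fstar (digit b n i).

Definition cycle_number (f : nat -> nat) (u : nat) : Prop :=
  0 < u /\ exists r, 0 < r /\ iter r f u = u.

Definition u_integer (f : nat -> nat) (u n : nat) : Prop :=
  0 < n /\ exists r, 0 < r /\ iter r f n = u.

(* Main.v *)
Require Import Defs.
From mathcomp Require Import all_boot all_order all_algebra.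
From mathcomp Require Import cyclic zify ring.
Set Implicit Arguments. Unset Strict Implicit. Unset Printing Implicit Defensive.

Section F.
Variables (b : nat) (fstar : nat -> nat).
Hypothesis hb : 2 <= b.
Hypothesis h0 : fstar 0 = 0.
Local Notation f := (digit_map b fstar).

Let G n N := \sum_(i < N) fstar (digit b n i).

Lemma G_ext n N M : n < b ^ N -> N <= M -> G n N = G n M.
Proof.
move=> hn; elim: M => [|M IH]; first by rewrite leqn0 => /eqP ->.
rewrite leq_eqVlt => /orP [/eqP -> //| hNM].
rewrite /G big_ord_recr /= -/(G n M) -IH //.
have -> : digit b n M = 0.
  rewrite /digit divn_small ?mod0n //.
  apply: (leq_trans hn); apply: leq_pexp2l => //; lia.
by rewrite h0 addn0.
Qed.

Lemma f_G n N : n < b ^ N -> f n = G n N.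
Proof.
move=> hn; rewrite /digit_map -/(G n _).
have hT := trunc_log_ltn n hb.
case: (leqP (trunc_log b n).+1 N) => h.
  exact: G_ext.
by rewrite (G_ext hn (ltnW h)).
Qed.

Lemma f_rec n : f n = fstar (n %% b) + f (n %/ b).
Proof.
have hn : n < b ^ n by apply: ltn_expl; lia.
rewrite (f_G (N := n.+1)); last by apply: (leq_trans hn); apply: leq_pexp2l; lia.
rewrite (f_G (n := n %/ b) (N := n)); last first.
  rewrite ltn_divLR; last lia.
  by rewrite -expnSr; apply: (leq_trans hn); apply: leq_pexp2l; lia.
rewrite /G big_ord_recl /= /digit expn0 divn1; congr (_ + _).
by apply: eq_bigr => i _; rewrite /bump /= add1n expnS divnMA.
Qed.

Lemma f0 : f 0 = 0.
Proof. by rewrite (f_G (N := 0)) // /G big_ord0. Qed.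

Lemma f_digit d : d < b -> f d = fstar d.
Proof. by move=> hd; rewrite f_rec modn_small // divn_small // f0 addn0. Qed.

Lemma f_add A K r : r < b ^ K -> f (A * b ^ K + r) = f A + f r.
Proof.
elim: K A r => [|K IH] A r hr.
  by move: hr; rewrite expn0 ltnS leqn0 => /eqP ->; rewrite muln1 addn0 f0 addn0.
rewrite f_rec (f_rec r).
have hb0 : 0 < b by lia.
have -> : (A * b ^ K.+1 + r) %% b = r %% b.
  by rewrite expnSr mulnA -modnDml modnMl add0n.
have -> : (A * b ^ K.+1 + r) %/ b = A * b ^ K + r %/ b.
  by rewrite expnSr mulnA divnMDl.
rewrite IH; first lia.
by rewrite ltn_divLR // -expnSr.
Qed.

End F.

Section M.
Variables (b : nat) (fstar : nat -> nat).
Hypothesis hb : 2 <= b.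
Hypothesis h0 : fstar 0 = 0.
Hypothesis h1 : fstar 1 = 1.
Local Notation f := (digit_map b fstar).
Local Notation g := (fstar b.-1).
Hypothesis gpos : 0 < g.
Variable u : nat.
Hypothesis hu : cycle_number f u.

Lemma f_pow k : f (b ^ k) = 1.
Proof.
have := f_add hb h0 1 (K := k) (r := 0); rewrite expn_gt0 addn0 mul1n => ->; last lia.
by rewrite f_digit // ?f0 // h1.
Qed.

Lemma f_rep L : f (b ^ L - 1) = L * g.
Proof.
elim: L => [|L IH]; first by rewrite expn0 subnn f0.
have hP : 0 < b ^ L by rewrite expn_gt0; lia.
have -> : b ^ L.+1 - 1 = (b ^ L - 1) * b ^ 1 + b.-1.
  rewrite expnSr expn1; move: hP; set P := b ^ L => hP. nia.
rewrite f_add // ?IH ?f_digit //; [lia | lia | rewrite expn1; lia].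
Qed.

Fixpoint rep k := if k is k'.+1 then rep k' * b ^ 1 + 1 else 0.
Lemma f_repn k : f (rep k) = k.
Proof.
elim: k => [|k IH] /=; first exact: f0.
rewrite f_add // ?IH ?f_digit // ?h1; try lia; rewrite expn1; lia.
Qed.

Definition U x := u_integer f u x.
Definition good (S : seq nat) := exists c, forall s, s \in S -> U (c + s).
Definition P (phi : nat -> nat) := forall S, good (map phi S) -> good S.

Lemma U_f x : U (f x) -> U x.
Proof.
move=> [hp [r [hr hit]]]; split.
  by case: x hp hit => // ; rewrite f0.
by exists r.+1; split => //; rewrite iterSr.
Qed.

Lemma U_u : U u.
Proof. by case: hu => hp [r hr]; split => //; exists r. Qed.

Lemma P_id : P id.
Proof. by move=> S; rewrite map_id. Qed.

Lemma P_comp phi psi : P phi -> P psi -> P (psi \o phi).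
Proof. by move=> h1' h2 S; rewrite map_comp => /h2 /h1'. Qed.

Lemma le_sumn s S : s \in S -> s <= sumn S.
Proof.
elim: S => //= x S IH; rewrite in_cons => /orP [/eqP -> | /IH]; lia.
Qed.

Lemma P_move z : P (fun s => f (z + s)).
Proof.
move=> S [c hc].
set K := z + sumn S + 1.
exists (rep c * b ^ K + z) => s hs.
apply: U_f; rewrite -addnA f_add //; last first.
  have := le_sumn hs; have := ltn_expl K hb; rewrite /K; lia.
rewrite f_repn; apply: hc; by apply/mapP; exists s.
Qed.

Lemma good_sub S T : {subset S <= T} -> good T -> good S.
Proof. by move=> hST [c hc]; exists c => s /hST /hc. Qed.

Definition R d := forall p, exists phi, P phi /\ phi p = phi (p + d).

Lemma R0 : R 0.
Proof. by move=> p; exists id; rewrite addn0; split => //; apply: P_id. Qed.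

Lemma R_step d d' z0 :
  (f (z0 + d) = f z0 + d' \/ f z0 = f (z0 + d) + d') -> R d' -> R d.
Proof.
move=> hz hR p.
set K := z0 + d.+1.
have hK : z0 + d < b ^ K by have := ltn_expl K hb; rewrite /K; lia.
have hK0 : z0 < b ^ K by lia.
set z := p.+1 * b ^ K + z0.
have hzp : p <= z.
  have : 0 < b ^ K by rewrite expn_gt0; lia.
  rewrite /z; nia.
have e1 : f (z - p + p) = f p.+1 + f z0 by rewrite subnK // f_add.
have e2 : f (z - p + (p + d)) = f p.+1 + f (z0 + d).
  by rewrite addnA subnK // -addnA f_add.
case: hz => hz.
- have [psi [hpsi e]] := hR (f p.+1 + f z0).
  exists (psi \o (fun s => f (z - p + s))); split.
    by apply: P_comp => //; apply: P_move.
  by rewrite /= e1 e2 hz addnA.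
- have [psi [hpsi e]] := hR (f p.+1 + f (z0 + d)).
  exists (psi \o (fun s => f (z - p + s))); split.
    by apply: P_comp => //; apply: P_move.
  by rewrite /= e1 e2 hz addnA.
Qed.

Lemma R_all_good (hRall : forall d, R d) : forall S, good S.
Proof.
have good1 : forall p, good [:: p].
  move=> p; apply: (@P_move (b ^ p - p) [:: p]); rewrite /= subnK; last first.
    by have := ltn_expl p hb; lia.
  rewrite f_pow; exists u.-1 => s; rewrite inE => /eqP ->.
  have := U_u; case: hu => hp _; by rewrite addn1 prednK.
move=> S; move Hn : (size S) => n; elim: n S Hn => [|n IH] S Hn.
  by case: S Hn => // _; exists 0.
case: S Hn => [//|p [|q rest]] /= Hn; first exact: good1.
have [phi [hphi e]] : exists phi, P phi /\ phi p = phi q.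
  case: (leqP p q) => hpq.
    by have := hRall (q - p) p; rewrite subnKC.
  have [phi [hphi e]] := hRall (p - q) q; exists phi; split => //.
  by rewrite e subnKC // ltnW.
apply: hphi => /=; rewrite e.
apply: (good_sub (T := phi q :: map phi rest)).
  by move=> x; rewrite !inE => /orP [->|] //.
apply: IH; rewrite /= size_map; lia.
Qed.

End M.
Module Res.
Section ResSec.
Import Order.TTheory GRing.Theory Num.Theory.
Local Open Scope ring_scope.

Lemma residue (g ms fs w c : nat) : (0 < g)%N ->
  coprimez (fs%:Z - ms%:Z) g%:Z -> (g * fs < w)%N ->
  exists k, (k < g)%N /\ (g %| k * ms + (w - k * fs) + c)%N.
Proof.
move=> gpos hcop hw.
have [u [v huv]] := Bezoutz (fs%:Z - ms%:Z) g%:Z.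
move: hcop; rewrite /coprimez => /eqP hg1; rewrite hg1 in huv.
set X : int := (w + c)%N%:Z.
set kz : int := ((X * u) %% g%:Z)%Z.
have g0 : (g%:Z != 0) by rewrite eqz_nat; lia.
have kz0 : (0 <= kz) by apply: modz_ge0.
have kzg : (kz < g%:Z) by apply: ltz_pmod; rewrite ltz_nat.
have kzE : kz = (`|kz|%N)%:Z by rewrite abszE ger0_norm.
set k := `|kz|%N.
have kg : (k < g)%N by rewrite -ltz_nat -kzE.
exists k; split => //.
have hkw : (k * fs <= w)%N.
  apply: leq_trans (ltnW hw); apply: leq_mul => //; exact: ltnW.
suff : (g%:Z %| (k * ms + (w - k * fs) + c)%N%:Z)%Z by [].
have -> : (k * ms + (w - k * fs) + c)%N%:Z = (X - kz * (fs%:Z - ms%:Z)).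
  rewrite kzE -/k /X !PoszD -subzn // !PoszM; ring.
have hq := divz_eq (X * u) g%:Z.
rewrite -/kz in hq.
have -> : (X - kz * (fs%:Z - ms%:Z) = g%:Z * (X * v + (X * u %/ g%:Z)%Z * (fs%:Z - ms%:Z))).
  have -> : kz = (X * u - (X * u %/ g%:Z)%Z * g%:Z) by rewrite {1}hq; ring.
  have : X = (X * (u * (fs%:Z - ms%:Z) + v * g%:Z)) by rewrite huv mulr1.
  move=> hX; rewrite {1}hX; ring.
by apply: dvdz_mulr; rewrite dvdzz.
Qed.

End ResSec.
End Res.
Import Res.

Section N.
Variables (b : nat) (fstar : nat -> nat).
Hypothesis hb : 2 <= b.
Hypothesis h0 : fstar 0 = 0.
Hypothesis h1 : fstar 1 = 1.
Local Notation f := (digit_map b fstar).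
Local Notation g := (fstar b.-1).
Hypothesis gpos : 0 < g.
Hypothesis hcop : coprime b g.
Variable ms : nat.
Hypothesis hms : ms < b.
Hypothesis hcz : coprimez ((fstar ms)%:Z - ms%:Z)%R (fstar b.-1)%:Z.

Lemma bK1 M : b ^ (totient g * M) = 1 %[mod g].
Proof. by rewrite expnM -modnXm Euler_exp_totient // modnXm exp1n. Qed.

Lemma addDigit N d B : d < b -> exists N',
  f N' = fstar d + f N /\ N' = d + N %[mod g] /\ (0 < d -> B <= N').
Proof.
move=> hd.
set M := N + B + 1; set K := totient g * M.
have hT : 0 < totient g by rewrite totient_gt0.
have hMK : M < b ^ K.
  apply: (leq_trans (ltn_expl M hb)); apply: leq_pexp2l; first lia.
  rewrite /K; apply: leq_pmull => //.
have hN : N < b ^ K by move: hMK; rewrite /M; lia.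
have hB : B < b ^ K by move: hMK; rewrite /M; lia.
exists (d * b ^ K + N); split.
  by rewrite f_add // (f_digit hb h0 hd).
split.
  by rewrite -modnDml -modnMmr bK1 modnMmr muln1 modnDml.
move=> d0; have : b ^ K <= d * b ^ K by apply: leq_pmull.
lia.
Qed.

Lemma build k t B : exists N,
  f N = k * fstar ms + t /\ N = k * ms + t %[mod g] /\ (0 < t -> B <= N).
Proof.
elim: t => [|t [N [e1 [e2 e3]]]].
  elim: k => [|k [N [e1 [e2 _]]]].
    by exists 0; rewrite (f0 hb h0).
  have [N' [e1' [e2' _]]] := addDigit N 0 hms.
  exists N'; split; first by rewrite e1' e1; lia.
  split => //; rewrite e2' -modnDmr e2 modnDmr; congr (_ %% _); lia.
have [N' [e1' [e2' e3']]] := addDigit N B hb.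
exists N'; split; first by rewrite e1' e1 h1; lia.
split; last by move=> _; apply: e3'.
by rewrite e2' -modnDmr e2 modnDmr; congr (_ %% _); lia.
Qed.

End N.

Lemma R_all (b : nat) (fstar : nat -> nat) (u : nat) (hb : 1 < b) (h0 : fstar 0 = 0)
  (h1 : fstar 1 = 1) (gpos : 0 < fstar b.-1) (hcop : coprime b (fstar b.-1))
  (ms : nat) (hms : ms < b) (hcz : coprimez ((fstar ms)%:Z - ms%:Z)%R (fstar b.-1)%:Z) :
  forall d, R b fstar u d.
Proof.
set g := fstar b.-1.
move=> [|d']; first exact: R0.
set d := d'.+1.
set c := 1 + digit_map b fstar d'.
set k := g * fstar ms + 1.
set w := b ^ k - 1.
have hw : g * fstar ms < w by have := ltn_expl k hb; rewrite /w /k; lia.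
have [kk [hkk hdv]] := residue c gpos hcz hw.
have hkw : kk * fstar ms < w.
  apply: leq_ltn_trans hw; apply: leq_mul => //; exact: ltnW.
have [N [e1 [e2 e3]]] := build hb h0 h1 gpos hcop hms hcz kk (w - kk * fstar ms) (d * g).
have hNB : d * g <= N by apply: e3; lia.
have hfN : digit_map b fstar N = w by rewrite e1; lia.
have hg : g %| N + c by rewrite /dvdn -modnDml e2 modnDml.
set L := (N + c) %/ g.
have hL : L * g = N + c by rewrite divnK.
have hLd : d <= L.
  by rewrite -(leq_pmul2r gpos) hL; lia.
have hbL : d' < b ^ L by have := ltn_expl L hb; lia.
apply: (R_step hb h0 h1 gpos (d' := N) (z0 := b ^ L - 1)).
  right; rewrite f_rep //.
  have -> : b ^ L - 1 + d = 1 * b ^ L + d'.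
    have : 0 < b ^ L by rewrite expn_gt0; lia.
    rewrite /d; lia.
  rewrite f_add // (f_digit hb h0 (d := 1)) // h1 -/c.
  rewrite -/g hL; lia.
apply: (R_step hb h0 h1 gpos (d' := w) (z0 := 0)).
  by left; rewrite (f0 hb h0) add0n hfN.
apply: (R_step hb h0 h1 gpos (d' := 0) (z0 := 1)).
  left; rewrite addn0 addnC subnK ?f_pow // ?(f_digit hb h0 (d := 1)) //.
  by rewrite expn_gt0; lia.
exact: R0.
Qed.

Theorem theorem1p1 (b : nat) (fstar : nat -> nat)
  (hb : 2 <= b)
  (h0 : fstar 0 = 0) (h1 : fstar 1 = 1)
  (hcop : coprime b (fstar b.-1))
  (hm : exists2 ms : nat, ms < b &
     coprimez ((digit_map b fstar ms)%:Z - ms%:Z)%R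
              (digit_map b fstar b.-1)%:Z) :
  forall u : nat, cycle_number (digit_map b fstar) u ->
  forall n : nat, 0 < n ->
  exists k : nat, 0 < k /\
    forall j : nat, j < n -> u_integer (digit_map b fstar) u (k + j).
Proof.
move=> u hu n hn.
have gpos : 0 < fstar b.-1.
  move: hcop; case: (fstar b.-1) => // /eqP; rewrite gcdn0; lia.
case: hm => ms hms hcz.
rewrite !(f_digit hb h0) in hcz; [|lia|done].
have hR := R_all u hb h0 h1 gpos hcop hms hcz.
have [c hc] := R_all_good hb h0 h1 gpos hu hR (iota 0 n).
have hU : forall j, j < n -> u_integer (digit_map b fstar) u (c + j).
  by move=> j hj; apply: hc; rewrite mem_iota; lia.
exists c; split => //.
case: c hc hU => // _ hU.
by have [] := hU 0 hn.
Qed.
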